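(* Let $T$ be a binary search tree whose nodes are labelled with integers in $\{1,\dots,t\}$ so that no node has an ancestor with a label greater than its own label. For $j \in \{1,\dots,t\}$, let $L_j$ be the set of nodes with label $j$. Assume $|L_j| = 2^{2^j}$ for $j<t$ and $|L_t| \le 2^{2^t}$. Assume also that every maximal connected subtree $T'$ of $T$ consisting of nodes of a single layer $L_j$ is balanced, in the sense that every node of $T'$ has depth within $T'$ at most $O(\lg |T'|)$ (for instance, $T'$ is a red-black tree). Then every node $x \in L_j$ has depth $O(2^j)$ in $T$.
   Context: $\lg x := \log_2(x+2)$. The maximal connected single-layer subtrees are called layer-subtrees. The constant in the balance condition is uniform over all layer-subtrees. *)

(* Defs.v *)
From Stdlib Require Import Reals Lra Lia List Sorted Arith.
Import ListNotations.
Open Scope R_scope.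

Inductive tree : Type :=
| Leaf : tree
| Node : tree -> nat (* key *) -> nat (* label *) -> tree -> tree.

Fixpoint inorder (t : tree) : list nat :=
  match t with
  | Leaf => []
  | Node l k _ r => inorder l ++ k :: inorder r
  end.

Definition is_bst (t : tree) : Prop := Sorted Nat.lt (inorder t).

(* Nodes are addressed by paths from the root (false = left, true = right);
   the depth of the node at path p is length p (root has depth 0). *)
Fixpoint subtree_at (t : tree) (p : list bool) : tree :=
  match p, t with
  | [], _ => t
  | _, Leaf => Leaf
  | false :: p', Node l _ _ _ => subtree_at l p'
  | true :: p', Node _ _ _ r => subtree_at r p'
  end.

Definition label_at (t : tree) (p : list bool) : option nat :=
  match subtree_at t p with
  | Leaf => None
  | Node _ _ j _ => Some j
  end.

Definition is_node (t : tree) (p : list bool) : Prop := exists j, label_at t p = Some j.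

Fixpoint size (t : tree) : nat :=
  match t with
  | Leaf => 0%nat
  | Node l _ _ r => (size l + 1 + size r)%nat
  end.

Fixpoint count_label (j : nat) (t : tree) : nat :=
  match t with
  | Leaf => 0%nat
  | Node l _ lab r => (count_label j l + (if Nat.eqb lab j then 1 else 0) + count_label j r)%nat
  end.

Fixpoint prune (j : nat) (t : tree) : tree :=
  match t with
  | Leaf => Leaf
  | Node l k lab r => if Nat.eqb lab j then Node (prune j l) k lab (prune j r) else Leaf
  end.

(* q is the root of a layer-subtree (maximal connected single-layer subtree):
   q is a node, and either q is the root of t or its parent has a different label. *)
Definition layer_root (t : tree) (q : list bool) : Prop :=
  exists j, label_at t q = Some j /\
   (q = [] \/ exists q' b, q = q' ++ [b] /\ label_at t q' <> Some j).

Definition layer_subtree (t : tree) (q : list bool) : tree :=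
  match label_at t q with
  | Some j => prune j (subtree_at t q)
  | None => Leaf
  end.

Definition lg (x : R) : R := ln (x + 2) / ln 2.

Definition labels_in_range (t : nat) (T : tree) : Prop :=
  forall p j, label_at T p = Some j -> (1 <= j <= t)%nat.

Definition ancestor_monotone (T : tree) : Prop :=
  forall p s i j, label_at T p = Some i -> label_at T (p ++ s) = Some j -> (i <= j)%nat.

Definition layer_sizes (t : nat) (T : tree) : Prop :=
  (forall j, (1 <= j < t)%nat -> count_label j T = 2 ^ (2 ^ j))%nat /\
  (count_label t T <= 2 ^ (2 ^ t))%nat.

Definition layers_balanced (c : R) (T : tree) : Prop :=
  forall q, layer_root T q ->
    forall s, is_node (layer_subtree T q) s ->
      INR (length s) <= c * lg (INR (size (layer_subtree T q))).

(* Main.v *)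
Require Import Defs.
From Stdlib Require Import Reals List Lra Lia Arith.
Import ListNotations.
Open Scope R_scope.

Lemma subtree_leaf : forall p, subtree_at Leaf p = Leaf.
Proof. destruct p as [|[] p]; reflexivity. Qed.

Lemma subtree_nil : forall t, subtree_at t [] = t.
Proof. destruct t; reflexivity. Qed.

Lemma subtree_app : forall a t b, subtree_at t (a ++ b) = subtree_at (subtree_at t a) b.
Proof.
  induction a as [|x a IH]; intros t b; [rewrite subtree_nil; reflexivity|].
  destruct t as [|l k lab r].
  - rewrite !subtree_leaf. reflexivity.
  - destruct x; simpl; apply IH.
Qed.

Lemma label_app : forall T a b, label_at T (a ++ b) = label_at (subtree_at T a) b.
Proof. intros. unfold label_at. rewrite subtree_app. reflexivity. Qed.

Lemma prune_sub : forall j s u,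
  subtree_at (prune j u) s = Leaf \/ subtree_at (prune j u) s = prune j (subtree_at u s).
Proof.
  intros j s; induction s as [|a s IH]; intros u; [right; rewrite !subtree_nil; reflexivity|].
  destruct u as [|l k lab r].
  - left. simpl. destruct a; reflexivity.
  - simpl. destruct (Nat.eqb lab j).
    + destruct a; simpl; apply IH.
    + left. simpl; destruct a; reflexivity.
Qed.

Lemma prune_root : forall j u, label_at u [] = Some j -> label_at (prune j u) [] = Some j.
Proof.
  intros j u. unfold label_at. rewrite !subtree_nil. destruct u as [|l k lab r]; simpl; try discriminate.
  intro H; inversion H; subst. rewrite Nat.eqb_refl. reflexivity.
Qed.

Lemma prune_ext : forall j u s b, label_at (prune j u) s = Some j ->
  label_at u (s ++ [b]) = Some j -> label_at (prune j u) (s ++ [b]) = Some j.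
Proof.
  intros j u s b. unfold label_at. rewrite !subtree_app.
  destruct (prune_sub j s u) as [H|H]; rewrite H; [discriminate|].
  destruct (subtree_at u s) as [|l k lab r]; simpl; [discriminate|].
  destruct (Nat.eqb lab j) eqn:E; simpl; [|discriminate].
  intros _. destruct b; simpl.
  - destruct r as [|l' k' lab' r']; simpl; try discriminate.
    intro H2; inversion H2; subst. rewrite Nat.eqb_refl. reflexivity.
  - destruct l as [|l' k' lab' r']; simpl; try discriminate.
    intro H2; inversion H2; subst. rewrite Nat.eqb_refl. reflexivity.
Qed.

Lemma layer_decomp : forall T p j, label_at T p = Some j ->
  exists q s, p = q ++ s /\ label_at T q = Some j /\
   (q = [] \/ exists q' b, q = q' ++ [b] /\ label_at T q' <> Some j) /\
   label_at (prune j (subtree_at T q)) s = Some j.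
Proof.
  intros T p. induction p as [|x p IH] using rev_ind; intros j H.
  - exists [], []. split; [reflexivity|]. split; [exact H|].
    split; [left; reflexivity|]. apply prune_root. rewrite subtree_nil. exact H.
  - assert (Hnew : label_at T p <> Some j ->
      exists q s, p ++ [x] = q ++ s /\ label_at T q = Some j /\
      (q = [] \/ exists q' b, q = q' ++ [b] /\ label_at T q' <> Some j) /\
      label_at (prune j (subtree_at T q)) s = Some j).
    { intro Hne. exists (p ++ [x]), []. split; [rewrite app_nil_r; reflexivity|].
      split; [exact H|]. split; [right; exists p, x; split; auto|].
      apply prune_root. rewrite <- label_app, app_nil_r. exact H. }
    destruct (label_at T p) as [i|] eqn:E.
    + destruct (Nat.eq_dec i j) as [->|Hij].
      * destruct (IH j eq_refl) as (q & s & Hp & Hq & Hor & Hs).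
        exists q, (s ++ [x]). split; [rewrite Hp, app_assoc; reflexivity|].
        split; [exact Hq|]. split; [exact Hor|].
        apply prune_ext; [exact Hs|]. rewrite <- label_app, app_assoc, <- Hp. exact H.
      * apply Hnew. congruence.
    + apply Hnew. discriminate.
Qed.

Lemma parent_node : forall T a b j, label_at T (a ++ b) = Some j -> exists i, label_at T a = Some i.
Proof.
  intros T a b j. unfold label_at. rewrite subtree_app.
  destruct (subtree_at T a); [rewrite subtree_leaf; discriminate|eauto].
Qed.

Lemma size_prune : forall j u, (size (prune j u) <= count_label j u)%nat.
Proof.
  intros j u; induction u as [|l IHl k lab r IHr]; simpl; [lia|].
  destruct (Nat.eqb lab j); simpl; lia.
Qed.

Lemma count_sub : forall j q u, (count_label j (subtree_at u q) <= count_label j u)%nat.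
Proof.
  intros j q; induction q as [|a q IH]; intros u; [rewrite subtree_nil; lia|].
  destruct u as [|l k lab r].
  - rewrite subtree_leaf. lia.
  - simpl. destruct (Nat.eqb lab j); destruct a;
    [specialize (IH r)|specialize (IH l)|specialize (IH r)|specialize (IH l)]; lia.
Qed.

Lemma ln_le : forall x y, 0 < x -> x <= y -> ln x <= ln y.
Proof.
  intros x y Hx Hxy. destruct (Rle_lt_or_eq_dec x y Hxy) as [H|H].
  - left. apply ln_increasing; assumption.
  - subst. right. reflexivity.
Qed.

Lemma lg_bound : forall n N, (n <= 2 ^ N)%nat -> 0 <= lg (INR n) <= INR N + 2.
Proof.
  intros n N Hn. unfold lg.
  assert (Hl2 : 0 < ln 2) by (rewrite <- ln_1; apply ln_increasing; lra).
  assert (H0 := pos_INR n).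
  assert (HP : 1 <= 2 ^ N) by (apply pow_R1_Rle; lra).
  assert (Hn' : INR n <= 2 ^ N).
  { apply le_INR in Hn. rewrite pow_INR in Hn. replace (INR 2) with 2 in Hn by (simpl; lra). exact Hn. }
  split.
  - unfold Rdiv. apply Rmult_le_pos; [|left; apply Rinv_0_lt_compat; lra].
    rewrite <- ln_1. apply ln_le; lra.
  - assert (H : ln (INR n + 2) <= INR (N + 2) * ln 2).
    { rewrite <- ln_pow by lra. apply ln_le; [lra|].
      rewrite pow_add. simpl. lra. }
    replace (INR (N + 2)) with (INR N + 2) in H by (rewrite plus_INR; simpl; lra).
    apply (Rmult_le_reg_r (ln 2)); [exact Hl2|].
    unfold Rdiv. rewrite Rmult_assoc, Rinv_l, Rmult_1_r; lra.
Qed.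

Lemma main : forall c t T, labels_in_range t T -> layer_sizes t T -> layers_balanced c T ->
  ancestor_monotone T -> forall n p j, (length p < n)%nat -> label_at T p = Some j ->
  INR (length p) + 1 <= (3 * Rabs c + 1) * 2 ^ (j + 1).
Proof.
  intros c t T Hlab Hsz Hbal Hmon n. induction n as [|n IH]; intros p j Hl Hp; [lia|].
  destruct (layer_decomp T p j Hp) as (q & s & Hpq & Hq & Hor & Hs).
  assert (HP : 1 <= 2 ^ j) by (apply pow_R1_Rle; lra).
  assert (Hca := Rabs_pos c).
  assert (Hseg : INR (length s) <= Rabs c * (2 ^ j + 2)).
  { assert (Hb := Hbal q (ex_intro _ j (conj Hq Hor)) s).
    unfold layer_subtree in Hb. rewrite Hq in Hb.
    specialize (Hb (ex_intro _ j Hs)).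
    assert (Hc : (size (prune j (subtree_at T q)) <= 2 ^ (2 ^ j))%nat).
    { pose proof (size_prune j (subtree_at T q)). pose proof (count_sub j q T).
      destruct (Hlab p j Hp) as [H1 H2]. destruct Hsz as [Ha Hb2].
      destruct (Nat.eq_dec j t) as [->|Hne]; [lia|].
      rewrite (Ha j) in * by lia. lia. }
    destruct (lg_bound _ _ Hc) as [Hg1 Hg2].
    rewrite pow_INR in Hg2. replace (INR 2) with 2 in Hg2 by (simpl; lra).
    eapply Rle_trans; [exact Hb|].
    eapply Rle_trans; [apply Rmult_le_compat_r; [exact Hg1| apply Rle_abs]|].
    apply Rmult_le_compat_l; [exact Hca|exact Hg2]. }
  assert (E2 : 2 ^ (j + 1) = 2 ^ j * 2) by (rewrite pow_add; ring).
  rewrite E2.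
  destruct Hor as [-> | (q' & b & -> & Hne)].
  - simpl in Hpq. subst p.
    assert (Rabs c * (2 ^ j - 1) >= 0) by nra. nra.
  - destruct (parent_node T q' [b] j Hq) as [i Hi].
    assert (Hij : (i <= j)%nat).
    { apply (Hmon q' ([b] ++ s) i j Hi). rewrite app_assoc, <- Hpq. exact Hp. }
    assert (Hij' : i <> j) by (intro; subst; congruence).
    assert (Hlen : length p = (length q' + 1 + length s)%nat).
    { rewrite Hpq, !length_app. simpl. lia. }
    assert (IHq := IH q' i ltac:(lia) Hi).
    assert (Hpow : 2 ^ (i + 1) <= 2 ^ j) by (apply Rle_pow; [lra|lia]).
    rewrite Hlen, !plus_INR. simpl (INR 1).
    assert ((3 * Rabs c + 1) * 2 ^ (i + 1) <= (3 * Rabs c + 1) * 2 ^ j)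
      by (apply Rmult_le_compat_l; lra).
    assert (Rabs c * (2 ^ j - 1) >= 0) by nra. nra.
Qed.

Theorem lemma1 :
  forall c : R, exists C : R,
    forall (t : nat) (T : tree),
      is_bst T ->
      labels_in_range t T ->
      ancestor_monotone T ->
      layer_sizes t T ->
      layers_balanced c T ->
      forall (p : list bool) (j : nat),
        label_at T p = Some j ->
        INR (length p) <= C * 2 ^ j.
Proof.
  intros c. exists (2 * (3 * Rabs c + 1)).
  intros t T _ Hlab Hmon Hsz Hbal p j Hp.
  assert (H := main c t T Hlab Hsz Hbal Hmon (S (length p)) p j ltac:(lia) Hp).
  assert (E : 2 * (3 * Rabs c + 1) * 2 ^ j = (3 * Rabs c + 1) * 2 ^ (j + 1))
    by (rewrite pow_add; ring).
  lra.
Qed.
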